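(* Let $X\supseteq\omega_1$. Then $\mathrm{SRP}(X)$ holds if and only if for every projectively stationary $S\subseteq[X]^\omega$ there exists a continuous increasing function $f:\omega_1\to S$ with $\bigcup\mathrm{ran}(f)\supseteq\omega_1$.
   Context: For an uncountable set $Z$, a club on $[Z]^\omega$ is a set of the form $\{Y\in[Z]^\omega: f[Y^{<\omega}]\subseteq Y\}$ for some $f:Z^{<\omega}\to Z$ (clubs on $\mathcal P(Z)$ are defined the same way with all subsets), and a set is stationary iff it meets every club. A set $S\subseteq[X]^\omega$ is projectively stationary iff $\omega_1\subseteq X$, $S$ is stationary, and $\{A\cap\omega_1: A\in S\}$ contains a club on $[\omega_1]^\omega$. $S$ strongly reflects on $Z\subseteq X$ iff $S\cap[Z]^\omega$ contains a club on $[Z]^\omega$. $\mathrm{SRP}(X)$: every projectively stationary $S\subseteq[X]^\omega$ strongly reflects on some $Z$ with $\omega_1\subseteq Z\subseteq X$ and $|Z|=\omega_1$. A function $f$ from an ordinal into sets is increasing iff $\alpha<\beta$ implies $f(\alpha)\subseteq f(\beta)$, and continuous iff $f(\lambda)=\bigcup_{\alpha<\lambda}f(\alpha)$ for every limit $\lambda$ in its domain. *)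

(* Defs.v *)
From Stdlib Require Import List.
Import ListNotations.

(* Subsets of a type T are predicates T -> Prop. *)
Definition subset {T : Type} (A B : T -> Prop) : Prop := forall x, A x -> B x.

Definition countable {T : Type} (Y : T -> Prop) : Prop :=
  exists g : {y : T | Y y} -> nat, forall a b, g a = g b -> a = b.

Definition in_ctbl {T : Type} (Z Y : T -> Prop) : Prop := countable Y /\ subset Y Z.

(* f[Y^{<omega}] is a subset of Y (finite sequences = lists). *)
Definition closed_under {T : Type} (f : list T -> T) (Y : T -> Prop) : Prop :=
  forall s, Forall Y s -> Y (f s).

(* C is a club on [Z]^omega: C = {Y in [Z]^omega : f[Y^{<omega}] subset Y}
   for some f : Z^{<omega} -> Z. *)
Definition is_club_on {T : Type} (Z : T -> Prop) (C : (T -> Prop) -> Prop) : Prop :=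
  exists f : list T -> T,
    (forall s, Forall Z s -> Z (f s)) /\
    (forall Y, C Y <-> (in_ctbl Z Y /\ closed_under f Y)).

Definition stationary_on {T : Type} (Z : T -> Prop) (S : (T -> Prop) -> Prop) : Prop :=
  forall C, is_club_on Z C -> exists Y, C Y /\ S Y.

Definition contains_club_on {T : Type} (Z : T -> Prop) (S : (T -> Prop) -> Prop) : Prop :=
  exists C, is_club_on Z C /\ (forall Y, C Y -> S Y).

(* (W, lt) is (an isomorphic copy of) omega_1: a well-order, uncountable,
   all of whose proper initial segments are countable. *)
Definition is_omega1 (W : Type) (lt : W -> W -> Prop) : Prop :=
  well_founded lt /\
  (forall a b c, lt a b -> lt b c -> lt a c) /\
  (forall a b, lt a b \/ a = b \/ lt b a) /\
  ~ countable (fun _ : W => True) /\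
  (forall a, countable (fun b => lt b a)).

Definition is_limit {W : Type} (lt : W -> W -> Prop) (l : W) : Prop :=
  (exists a, lt a l) /\ (forall a, lt a l -> exists b, lt a b /\ lt b l).

(* omega_1 is included in X via iota : W -> X.  {A cap omega_1 : A in S},
   as subsets of W. *)
Definition trace {W X : Type} (iota : W -> X) (S : (X -> Prop) -> Prop)
  : (W -> Prop) -> Prop :=
  fun B => exists A, S A /\ (forall a, B a <-> A (iota a)).

Definition proj_stationary {W X : Type} (iota : W -> X) (S : (X -> Prop) -> Prop) : Prop :=
  stationary_on (fun _ : X => True) S /\
  contains_club_on (fun _ : W => True) (trace iota S).

Definition strongly_reflects {X : Type} (S : (X -> Prop) -> Prop) (Z : X -> Prop) : Prop :=
  contains_club_on Z (fun Y => S Y /\ in_ctbl Z Y).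

Definition card_eq_W (W : Type) {X : Type} (Z : X -> Prop) : Prop :=
  exists g : W -> {x : X | Z x},
    (forall a b, g a = g b -> a = b) /\ (forall z, exists a, g a = z).

Definition SRP {W X : Type} (iota : W -> X) : Prop :=
  forall S : (X -> Prop) -> Prop,
    (forall A, S A -> countable A) ->
    proj_stationary iota S ->
    exists Z : X -> Prop,
      (forall a, Z (iota a)) /\ card_eq_W W Z /\ strongly_reflects S Z.

Definition increasing {W X : Type} (lt : W -> W -> Prop) (f : W -> X -> Prop) : Prop :=
  forall a b, lt a b -> subset (f a) (f b).

Definition continuous {W X : Type} (lt : W -> W -> Prop) (f : W -> X -> Prop) : Prop :=
  forall l, is_limit lt l -> forall x, f l x <-> exists a, lt a l /\ f a x.

(* Main.v *)
Require Import Defs.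
From Stdlib Require Import List Arith Lia Classical ClassicalEpsilon FunctionalExtensionality PropExtensionality ProofIrrelevance Cantor.
Import ListNotations.

Definition enum {T} (A : T -> Prop) := exists e : nat -> option T,
  (forall n y, e n = Some y -> A y) /\ (forall y, A y -> exists n, e n = Some y).

Lemma countable_enum {T} (A : T -> Prop) : countable A -> enum A.
Proof.
  intros [g Hg].
  exists (fun n => match excluded_middle_informative (exists y, g y = n) with
     | left H => Some (proj1_sig (proj1_sig (constructive_indefinite_description _ H)))
     | right _ => None end).
  split.
  - intros n y. destruct excluded_middle_informative as [H|H]; [|discriminate].
    intros E; injection E as <-. exact (proj2_sig (proj1_sig (constructive_indefinite_description _ H))).
  - intros y Ay. exists (g (exist _ y Ay)).
    destruct excluded_middle_informative as [H|H].
    + f_equal. destruct (constructive_indefinite_description _ H) as [z Hz]. simpl.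
      apply Hg in Hz. rewrite Hz. reflexivity.
    + exfalso; apply H; eauto.
Qed.

Lemma enum_countable {T} (A : T -> Prop) : enum A -> countable A.
Proof.
  intros [e [H1 H2]].
  exists (fun y => proj1_sig (constructive_indefinite_description _ (H2 _ (proj2_sig y)))).
  intros [a Ha] [b Hb]. simpl.
  destruct (constructive_indefinite_description _ (H2 a Ha)) as [n Hn].
  destruct (constructive_indefinite_description _ (H2 b Hb)) as [m Hm]. simpl.
  intros ->. rewrite Hn in Hm. injection Hm as ->. f_equal. apply proof_irrelevance.
Qed.

Lemma countable_inj {T U} (A : T -> Prop) (B : U -> Prop) (h : {x | A x} -> {y | B y}) :
  (forall a b, h a = h b -> a = b) -> countable B -> countable A.
Proof. intros Hh [g Hg]. exists (fun a => g (h a)). auto. Qed.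

Lemma countable_sub {T} (A B : T -> Prop) : (forall x, A x -> B x) -> countable B -> countable A.
Proof.
  intros HAB. apply countable_inj with (h := fun a => exist B (proj1_sig a) (HAB _ (proj2_sig a))).
  intros [a Ha] [b Hb] E. injection E as ->. f_equal; apply proof_irrelevance.
Qed.

Lemma enum_sub {T} (A B : T -> Prop) : (forall x, B x -> A x) -> enum A -> enum B.
Proof. intros H E. apply countable_enum. eapply countable_sub; [exact H|]. now apply enum_countable. Qed.

Lemma enum_single {T} (y : T) : enum (fun x => x = y).
Proof. exists (fun _ => Some y). split; [intros n z E; injection E; auto | intros z ->; exists 0; auto]. Qed.

Lemma enum_union {T} (A B : T -> Prop) : enum A -> enum B -> enum (fun x => A x \/ B x).
Proof.
  intros [e1 [H1 H1']] [e2 [H2 H2']].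
  exists (fun n => let (a,b) := Cantor.of_nat n in match a with 0 => e1 b | _ => e2 b end).
  split.
  - intros n y. destruct (Cantor.of_nat n) as [[|a] b]; eauto.
  - intros y [Ay|By].
    + destruct (H1' y Ay) as [n Hn]. exists (Cantor.to_nat (0,n)). rewrite Cantor.cancel_of_to. auto.
    + destruct (H2' y By) as [n Hn]. exists (Cantor.to_nat (1,n)). rewrite Cantor.cancel_of_to. auto.
Qed.

Lemma enum_image {T U} (h : T -> U) (A : T -> Prop) : enum A -> enum (fun y => exists x, A x /\ y = h x).
Proof.
  intros [e [H1 H2]]. exists (fun n => option_map h (e n)). split.
  - intros n y. destruct (e n) eqn:E; simpl; [|discriminate]. intros F; injection F as <-. eauto.
  - intros y [x [Ax ->]]. destruct (H2 x Ax) as [n Hn]. exists n. rewrite Hn. reflexivity.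
Qed.

Fixpoint dec_list {T} (e : nat -> option T) (k m : nat) : option (list T) :=
  match k with
  | 0 => Some []
  | S k' => let (a,b) := Cantor.of_nat m in
      match e a, dec_list e k' b with Some x, Some s => Some (x :: s) | _, _ => None end
  end.

Lemma enum_lists {T} (A : T -> Prop) : enum A -> enum (fun s => Forall A s).
Proof.
  intros [e [H1 H2]].
  exists (fun n => let (k,m) := Cantor.of_nat n in dec_list e k m).
  assert (S1 : forall k m s, dec_list e k m = Some s -> Forall A s).
  { induction k; simpl; intros m s E.
    - injection E as <-; constructor.
    - destruct (Cantor.of_nat m) as [a b]. destruct (e a) eqn:Ea; [|discriminate].
      destruct (dec_list e k b) eqn:Eb; [|discriminate]. injection E as <-. constructor; eauto. }
  assert (S2 : forall s, Forall A s -> exists m, dec_list e (length s) m = Some s).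
  { induction 1 as [|x s Ax Hs IH]; simpl.
    - exists 0; auto.
    - destruct (H2 x Ax) as [a Ha]. destruct IH as [b Hb]. exists (Cantor.to_nat (a,b)).
      rewrite Cantor.cancel_of_to, Ha, Hb. auto. }
  split.
  - intros n s. destruct (Cantor.of_nat n) as [k m]. apply S1.
  - intros s Hs. destruct (S2 s Hs) as [m Hm]. exists (Cantor.to_nat (length s, m)). rewrite Cantor.cancel_of_to. auto.
Qed.

Lemma enum_bigunion {T} (A : nat -> T -> Prop) : (forall n, enum (A n)) -> enum (fun x => exists n, A n x).
Proof.
  intros H.
  set (E := fun n => proj1_sig (constructive_indefinite_description _ (H n))).
  assert (HE : forall n, (forall m y, E n m = Some y -> A n y) /\ (forall y, A n y -> exists m, E n m = Some y)).
  { intro n. unfold E. destruct (constructive_indefinite_description _ (H n)) as [e He]. exact He. }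
  exists (fun k => let (a,b) := Cantor.of_nat k in E a b). split.
  - intros k y. destruct (Cantor.of_nat k) as [a b]. intros F. exists a. eapply (proj1 (HE a)); eauto.
  - intros y [n Hn]. destruct (proj2 (HE n) y Hn) as [m Hm]. exists (Cantor.to_nat (n,m)).
    rewrite Cantor.cancel_of_to. auto.
Qed.

Fixpoint stage {T} (g : list T -> T) (A : T -> Prop) (n : nat) : T -> Prop :=
  match n with 0 => A | S n' => fun x => stage g A n' x \/ exists s, Forall (stage g A n') s /\ x = g s end.
Definition clos {T} (g : list T -> T) (A : T -> Prop) : T -> Prop := fun x => exists n, stage g A n x.

Lemma stage_mono_n {T} g (A : T -> Prop) n m x : n <= m -> stage g A n x -> stage g A m x.
Proof. induction 1; simpl; auto. Qed.

Lemma stage_mono_A {T} g (A B : T -> Prop) n x : (forall y, A y -> B y) -> stage g A n x -> stage g B n x.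
Proof.
  intros HAB. revert x. induction n; simpl; auto.
  intros x [H|[s [Hs ->]]]; [left; auto|right; exists s; split; auto].
  eapply Forall_impl; [|exact Hs]. auto.
Qed.

Lemma clos_closed {T} g (A : T -> Prop) : closed_under g (clos g A).
Proof.
  intros s Hs. assert (exists n, Forall (stage g A n) s) as [n Hn].
  { induction Hs as [|x s [n Hx] _ [m Hm]].
    - exists 0; constructor.
    - exists (max n m). constructor.
      + eapply stage_mono_n; [|exact Hx]. lia.
      + eapply Forall_impl; [|exact Hm]. intros; eapply stage_mono_n; [|eauto]. lia. }
  exists (S n). simpl. right. eauto.
Qed.

Lemma enum_clos {T} g (A : T -> Prop) : enum A -> enum (clos g A).
Proof.
  intros HA. apply enum_bigunion. induction n; simpl; auto.
  apply enum_union; auto. apply enum_image. apply enum_lists. auto.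
Qed.

Lemma clos_sub {T} g (A Z : T -> Prop) : (forall x, A x -> Z x) -> (forall s, Forall Z s -> Z (g s)) ->
  forall x, clos g A x -> Z x.
Proof.
  intros HA Hg x [n Hn]. revert x Hn. induction n; simpl; auto.
  intros x [H|[s [Hs ->]]]; auto. apply Hg. eapply Forall_impl; [|exact Hs]; auto.
Qed.

Lemma wf_min {T} (R : T -> T -> Prop) : well_founded R -> forall Q : T -> Prop,
  (exists x, Q x) -> exists x, Q x /\ forall y, Q y -> ~ R y x.
Proof.
  intros wf Q [x Qx]. apply NNPP; intro Hn. revert Qx.
  induction x as [x IH] using (well_founded_ind wf). intros Qx. apply Hn. exists x. split; auto.
  intros y Qy Ryx. exact (IH y Ryx Qy).
Qed.

Lemma W_inhabited W lt : is_omega1 W lt -> inhabited W.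
Proof.
  intros (_&_&_&Hu&_). apply NNPP; intro Hn. apply Hu. exists (fun _ => 0).
  intros a. exfalso; apply Hn; constructor; exact (proj1_sig a).
Qed.

Lemma no_max W lt : is_omega1 W lt -> forall a, exists b, lt a b.
Proof.
  intros HW a. destruct HW as (wf&tr&tri&Hu&Hc). apply NNPP; intro Hn. apply Hu.
  apply enum_countable. apply enum_sub with (A := fun b => b = a \/ lt b a).
  - intros b _. destruct (tri a b) as [H|[H|H]]; auto. exfalso; eauto.
  - apply enum_union; [apply enum_single|apply countable_enum, Hc].
Qed.

Lemma bij_lemma W lt (HW : is_omega1 W lt) U (P : U -> Prop) (r : U -> U -> Prop) :
  well_founded r -> (forall u v, P u -> P v -> r u v \/ u = v \/ r v u) ->
  (forall u, P u -> countable (fun v => P v /\ r v u)) -> ~ countable P -> card_eq_W W P.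
Proof.
  intros wfr tot Hc Hu.
  assert (u0 : inhabited U).
  { apply NNPP; intro Hn. apply Hu. exists (fun _ => 0). intros a. exfalso; apply Hn; constructor; exact (proj1_sig a). }
  pose proof HW as (wf&tr&tri&HuW&HcW).
  set (F := fun (a : W) (rec : forall b, lt b a -> U) =>
     epsilon u0 (fun u => P u /\ (forall b (h : lt b a), rec b h <> u) /\
        forall v, P v -> (forall b (h : lt b a), rec b h <> v) -> ~ r v u)).
  set (G := Fix wf (fun _ => U) F).
  assert (GE : forall a, G a = F a (fun b _ => G b)).
  { intro a. unfold G. refine (@Fix_eq W lt wf (fun _ => U) F _ a). intros x f1 f2 Hf.
    assert (f1 = f2) as ->; [|reflexivity].
    apply functional_extensionality_dep; intro y. apply functional_extensionality_dep; intro p. auto. }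
  assert (Spec : forall a, P (G a) /\ (forall b, lt b a -> G b <> G a) /\
        forall v, P v -> (forall b, lt b a -> G b <> v) -> ~ r v (G a)).
  { intro a. rewrite GE. unfold F at 1.
    apply (epsilon_spec u0 (fun u => P u /\ (forall b (h : lt b a), G b <> u) /\
        forall v, P v -> (forall b (h : lt b a), G b <> v) -> ~ r v u)).
    destruct (wf_min r wfr (fun u => P u /\ forall b, lt b a -> G b <> u)) as [u [[Pu Hu1] Hmin]].
    - apply NNPP; intro Hn.
      assert (Hex : forall u : {u | P u}, exists b, lt b a /\ G b = proj1_sig u).
      { intros [u Pu]. apply NNPP; intro Hn2. apply Hn. exists u. split; auto.
        intros b Hb E. apply Hn2. eauto. }
      apply Hu. apply countable_inj with (B := fun b => lt b a)
        (h := fun u => exist _ (proj1_sig (constructive_indefinite_description _ (Hex u)))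
                                (proj1 (proj2_sig (constructive_indefinite_description _ (Hex u))))); [|apply HcW].
      intros x y E. injection E as E.
      pose proof (proj2 (proj2_sig (constructive_indefinite_description _ (Hex x)))) as H1.
      pose proof (proj2 (proj2_sig (constructive_indefinite_description _ (Hex y)))) as H2.
      assert (H3 : proj1_sig x = proj1_sig y) by (rewrite <- H1, <- H2; f_equal; exact E). clear H1 H2 E.
      destruct x as [x px], y as [y py]. simpl in *. subst. f_equal. apply proof_irrelevance.
    - exists u. split; [auto|split; [auto|]]. intros v Pv Hv. apply Hmin. split; auto. }
  assert (Ginj : forall a b, G a = G b -> a = b).
  { intros a b E. destruct (tri a b) as [H|[H|H]]; auto.
    - exfalso. exact (proj1 (proj2 (Spec b)) a H E).
    - exfalso. exact (proj1 (proj2 (Spec a)) b H (eq_sym E)). }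
  exists (fun a => exist P (G a) (proj1 (Spec a))). split.
  - intros a b E. injection E. auto.
  - intros [u Pu].
    assert (exists a, G a = u) as [a Ha].
    { apply NNPP; intro Hn.
      assert (Hr : forall a, r (G a) u).
      { intro a. destruct (Spec a) as (PG & _ & Hm).
        destruct (tot _ _ PG Pu) as [H|[H|H]]; auto.
        - exfalso; apply Hn; eauto.
        - exfalso. apply (Hm u Pu); auto. intros b _ E; apply Hn; eauto. }
      apply HuW. apply countable_inj with (B := fun v => P v /\ r v u)
        (h := fun a => exist _ (G (proj1_sig a)) (conj (proj1 (Spec (proj1_sig a))) (Hr (proj1_sig a)))).
      + intros [x px] [y py] E. injection E as E. apply Ginj in E. simpl in E. subst. f_equal. apply proof_irrelevance.
      + apply Hc; auto. }
    exists a. generalize (proj1 (Spec a)). rewrite Ha. intro p. f_equal. apply proof_irrelevance.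
Qed.

Lemma forward W lt (HW : is_omega1 W lt) X (iota : W -> X) :
  SRP iota ->
  (forall S : (X -> Prop) -> Prop,
     (forall A, S A -> countable A) ->
     proj_stationary iota S ->
     exists f : W -> (X -> Prop),
       (forall a, S (f a)) /\ increasing lt f /\ continuous lt f /\
       (forall a, exists b, f b (iota a))).
Proof.
  intros H S hS Hps. destruct (H S hS Hps) as (Z & HZ & _ & C & [g [Hg HC]] & HCS).
  pose proof HW as (wf&tr&tri&HuW&HcW).
  set (A := fun a x => exists b, lt b a /\ x = iota b).
  assert (Amono : forall a b, lt a b -> forall x, A a x -> A b x).
  { intros a b Hab x [c [Hc ->]]. exists c; eauto. }
  exists (fun a => clos g (A a)). split; [|split; [|split]].
  - intro a. apply HCS. apply HC. split; [split|].
    + apply enum_countable, enum_clos, enum_image, countable_enum, HcW.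
    + unfold subset. apply clos_sub; auto. intros x [b [_ ->]]. apply HZ.
    + apply clos_closed.
  - intros a b Hab x [n Hn]. exists n. eapply stage_mono_A; [apply (Amono a b Hab)|exact Hn].
  - intros l [[a0 Ha0] Hl].
    assert (K : forall n x, stage g (A l) n x -> exists a, lt a l /\ stage g (A a) n x).
    { intro n; induction n; simpl.
      - intros x Hx. destruct Hx as [b [Hb ->]]. destruct (Hl b Hb) as [c [Hbc Hcl]]. exists c. split; auto. exists b; auto.
      - intros x [Hx|[s [Hs ->]]].
        + destruct (IHn x Hx) as [a [Ha Hx']]. exists a. auto.
        + assert (exists a, lt a l /\ Forall (stage g (A a) n) s) as [a [Ha Hs']].
          { induction Hs as [|y s Hy _ IH].
            - exists a0. auto.
            - destruct (IHn y Hy) as [a1 [Ha1 Hy1]]. destruct IH as [a2 [Ha2 Hs2]].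
              destruct (tri a1 a2) as [E|[E|E]].
              + exists a2. split; auto. constructor; auto. eapply stage_mono_A; [apply (Amono _ _ E)|exact Hy1].
              + subst. exists a2. auto.
              + exists a1. split; auto. constructor; auto.
                eapply Forall_impl; [|exact Hs2]. intros z Hz. eapply stage_mono_A; [apply (Amono _ _ E)|exact Hz]. }
          exists a. split; auto. right. eauto. }
    intro x. split.
    + intros [n Hn]. destruct (K n x Hn) as [a [Ha Hx]]. exists a. split; auto. exists n; auto.
    + intros [a [Ha [n Hn]]]. exists n. eapply stage_mono_A; [apply (Amono _ _ Ha)|exact Hn].
  - intro a. destruct (no_max W lt HW a) as [b Hb]. exists b. exists 0. simpl. exists a. auto.
Qed.

Lemma backward W lt (HW : is_omega1 W lt) X (iota : W -> X) (Hiota : forall a b, iota a = iota b -> a = b) :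
  (forall S : (X -> Prop) -> Prop,
     (forall A, S A -> countable A) ->
     proj_stationary iota S ->
     exists f : W -> (X -> Prop),
       (forall a, S (f a)) /\ increasing lt f /\ continuous lt f /\
       (forall a, exists b, f b (iota a))) -> SRP iota.
Proof.
  intros H S hS Hps. destruct (H S hS Hps) as (f & Sf & Inc & Cont & Cov).
  pose proof HW as (wf&tr&tri&HuW&HcW).
  destruct (W_inhabited W lt HW) as [w0].
  set (Z := fun x => exists a, f a x).
  set (rho := fun x => epsilon (inhabits w0) (fun a => f a x /\ forall b, f b x -> ~ lt b a)).
  assert (rho_spec : forall x, Z x -> f (rho x) x /\ forall b, f b x -> ~ lt b (rho x)).
  { intros x Zx. unfold rho. apply (epsilon_spec (inhabits w0) (fun a => f a x /\ forall b, f b x -> ~ lt b a)).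
    apply wf_min; auto. }
  set (succ := fun a => epsilon (inhabits w0) (fun b => lt a b)).
  assert (succ_spec : forall a, lt a (succ a)).
  { intro a. unfold succ. apply (epsilon_spec (inhabits w0) (fun b => lt a b)). apply (no_max W lt HW). }
  set (Ex := fun x y => y = iota (rho x) \/ (exists a, x = iota a /\ (f a y \/ exists b, y = iota b /\ (lt b a \/ b = succ a)))).
  assert (Ex_enum : forall x, enum (Ex x)).
  { intro x. destruct (classic (exists a, x = iota a)) as [[a ->]|Hn].
    - apply enum_sub with (A := fun y => y = iota (rho (iota a)) \/ (f a y \/ exists b, (lt b a \/ b = succ a) /\ y = iota b)).
      + intros y [Hy|[a' [E [Hy|[b [-> Hb]]]]]]; auto; apply Hiota in E; subst a'; eauto.
      + apply enum_union; [apply enum_single|]. apply enum_union; [apply countable_enum; auto|].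
        apply enum_image. apply enum_union; [apply countable_enum; auto|apply enum_single].
    - apply enum_sub with (A := fun y => y = iota (rho x)); [|apply enum_single].
      intros y [Hy|[a [E _]]]; auto. exfalso; eauto. }
  set (en := fun x => epsilon (inhabits (fun _ : nat => iota w0))
              (fun e => (forall n, Ex x (e n)) /\ forall y, Ex x y -> exists n, e n = y)).
  assert (en_spec : forall x, (forall n, Ex x (en x n)) /\ forall y, Ex x y -> exists n, en x n = y).
  { intro x. unfold en. apply (epsilon_spec (inhabits (fun _ : nat => iota w0))
              (fun e => (forall n, Ex x (e n)) /\ forall y, Ex x y -> exists n, e n = y)).
    destruct (Ex_enum x) as [e [H1 H2]].
    exists (fun n => match e n with Some y => y | None => iota (rho x) end). split.
    - intro n. destruct (e n) eqn:E; [eauto|left; auto].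
    - intros y Hy. destruct (H2 y Hy) as [n Hn]. exists n. rewrite Hn. auto. }
  set (g := fun s : list X => match s with [] => iota w0 | x :: r => en x (length r) end).
  assert (ZE : forall x y, Ex x y -> Z y).
  { intros x y [->|[a [_ [Hy|[b [-> _]]]]]]; [apply Cov| exists a; auto|apply Cov]. }
  assert (Zg : forall s, Z (g s)).
  { intros [|x r]; simpl; [apply Cov|]. eapply ZE. apply (proj1 (en_spec x)). }
  exists Z. split; [apply Cov|split].
  -
    assert (Hinj : forall a, exists h : X -> nat, forall u v, f a u -> f a v -> h u = h v -> u = v).
    { intro a. destruct (hS _ (Sf a)) as [k Hk].
      exists (fun u => match excluded_middle_informative (f a u) with left Hu => k (exist _ u Hu) | right _ => 0 end).
      intros u v Hu Hv. destruct excluded_middle_informative as [Hu'|]; [|contradiction].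
      destruct excluded_middle_informative as [Hv'|]; [|contradiction].
      intro E. apply Hk in E. injection E. auto. }
    set (Hh := fun a => epsilon (inhabits (fun _ : X => 0)) (fun h => forall u v, f a u -> f a v -> h u = h v -> u = v)).
    assert (Hh_spec : forall a u v, f a u -> f a v -> Hh a u = Hh a v -> u = v).
    { intro a. unfold Hh. apply (epsilon_spec (inhabits (fun _ : X => 0)) (fun h => forall u v, f a u -> f a v -> h u = h v -> u = v)). auto. }
    set (idx := fun u => Hh (rho u) u).
    apply bij_lemma with (lt := lt) (r := fun u v => lt (rho u) (rho v) \/ (rho u = rho v /\ idx u < idx v)); auto.
    + intro u1.
      assert (K : forall a u, rho u = a -> Acc (fun u v => lt (rho u) (rho v) \/ (rho u = rho v /\ idx u < idx v)) u).
      { intro a. induction a as [a IHa] using (well_founded_ind wf).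
        intro n0. remember (idx n0) as n eqn:En. revert n0 En.
        induction n as [n IHn] using (well_founded_ind lt_wf). intros u En Ea. constructor.
        intros v [Hv|[Hv Hi]].
        - eapply IHa; [rewrite <- Ea; exact Hv|reflexivity].
        - eapply IHn; [rewrite En; exact Hi|reflexivity|congruence]. }
      eapply K; reflexivity.
    + intros u v Zu Zv. destruct (tri (rho u) (rho v)) as [E|[E|E]]; auto.
      destruct (Nat.lt_trichotomy (idx u) (idx v)) as [I|[I|I]]; auto.
      right; left. destruct (rho_spec u Zu) as [Hu _]. destruct (rho_spec v Zv) as [Hv _].
      unfold idx in I. rewrite E in Hu, I. eapply Hh_spec; eauto.
    + intros u Zu. apply countable_sub with (B := f (rho u)); [|apply hS, Sf].
      intros v [Zv [Hr|[Hr _]]]; destruct (rho_spec v Zv) as [Hv _].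
      * eapply Inc; eauto.
      * rewrite <- Hr; auto.
    + intro Hc. apply HuW. apply countable_inj with (B := Z) (h := fun a => exist Z (iota (proj1_sig a)) (Cov (proj1_sig a))); auto.
      intros [a pa] [b pb] E. injection E as E. apply Hiota in E. simpl in E. subst. f_equal; apply proof_irrelevance.
  -
    exists (fun Y => in_ctbl Z Y /\ closed_under g Y). split.
    + exists g. split; [intros; apply Zg|]. intro Y; tauto.
    + intros Y [[CY YZ] Cl]. split; [|split; auto].
      assert (ExY : forall x, Y x -> forall y, Ex x y -> Y y).
      { intros x Yx y Hy. destruct (proj2 (en_spec x) y Hy) as [n <-].
        specialize (Cl (x :: repeat x n)). simpl in Cl. rewrite repeat_length in Cl. apply Cl.
        constructor; auto. apply Forall_forall. intros z Hz. apply repeat_spec in Hz. subst; auto. }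
      assert (HD : exists d, ~ Y (iota d)).
      { apply NNPP; intro Hn. apply HuW.
        apply countable_inj with (B := Y) (h := fun a => exist Y (iota (proj1_sig a)) (NNPP _ (fun K => Hn (ex_intro _ (proj1_sig a) K)))); auto.
        intros [a pa] [b pb] E. injection E as E. apply Hiota in E. simpl in E. subst. f_equal; apply proof_irrelevance. }
      destruct (wf_min lt wf _ HD) as [d [Hd Hmin]].
      assert (below : forall b, lt b d -> Y (iota b)).
      { intros b Hb. apply NNPP; intro Hn. exact (Hmin b Hn Hb). }
      assert (only : forall b, Y (iota b) -> lt b d).
      { intros b Hb. destruct (tri b d) as [E|[E|E]]; auto.
        - subst; contradiction.
        - exfalso; apply Hd. apply (ExY _ Hb). right. exists b. split; auto. right. exists d. auto. }
      assert (lim : is_limit lt d).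
      { split.
        - exists w0. apply only. apply (Cl []). constructor.
        - intros a Ha. exists (succ a). split; auto. apply only.
          apply (ExY _ (below a Ha)). right. exists a. split; auto. right. exists (succ a). auto. }
      assert (EY : Y = f d).
      { apply functional_extensionality; intro x. apply propositional_extensionality. split.
        - intros Yx. destruct (rho_spec x (YZ x Yx)) as [Hx _].
          apply (Cont d lim x). exists (rho x). split; auto. apply only. apply (ExY _ Yx). left; auto.
        - intros Hx. apply (Cont d lim x) in Hx. destruct Hx as [a [Ha Hx]].
          apply (ExY _ (below a Ha)). right. exists a. auto. }
      rewrite EY. apply Sf.
Qed.

Theorem mainTheorem12
  (W : Type) (lt : W -> W -> Prop) (HW : is_omega1 W lt)
  (X : Type) (iota : W -> X) (Hiota : forall a b, iota a = iota b -> a = b) :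
  SRP iota <->
  (forall S : (X -> Prop) -> Prop,
     (forall A, S A -> countable A) ->
     proj_stationary iota S ->
     exists f : W -> (X -> Prop),
       (forall a, S (f a)) /\ increasing lt f /\ continuous lt f /\
       (forall a, exists b, f b (iota a))).
Proof.
  split; [apply forward; auto|apply backward; auto].
Qed.
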